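(* Let $d\ge 7$ and let $G$ be a $d$-regular graph with girth $g(G)\ge 5$. Then for every vertex $x\in V(G)$ there exists a proper $(d+1)$-coloring $c:V(G)\to[d+1]$ of $G$ in which $x$ and at least four of the neighbors of $x$ are b-vertices, i.e. for each of these five vertices $v$ every color of $[d+1]$ appears on $N[v]$.
   Context: $[k]=\{1,\dots,k\}$. $N[v]$ denotes the closed neighborhood of $v$. The girth $g(G)$ is the length of a shortest cycle in $G$. In a (proper) coloring $c$ with color set $[k]$, a vertex $v$ is a b-vertex if $\{c(u):u\in N[v]\}=[k]$. *)

(* Defs.v *)
From mathcomp Require Import all_boot.
Set Implicit Arguments. Unset Strict Implicit. Unset Printing Implicit Defensive.

Definition simple_graph (T : finType) (e : rel T) : Prop :=
  symmetric e /\ irreflexive e.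

Definition nbhd (T : finType) (e : rel T) (v : T) : {set T} := [set u | e v u].
Definition cnbhd (T : finType) (e : rel T) (v : T) : {set T} := v |: nbhd e v.

Definition regular (T : finType) (e : rel T) (d : nat) : Prop :=
  forall v : T, #|nbhd e v| = d.

Definition has_cycle_of_length (T : finType) (e : rel T) (k : nat) : Prop :=
  3 <= k /\ exists s : seq T, [/\ size s = k, uniq s & cycle e s].

(* girth(G) >= g : G has no cycle of length < g (acyclic graphs have
   infinite girth). *)
Definition girth_ge (T : finType) (e : rel T) (g : nat) : Prop :=
  forall k, k < g -> ~ has_cycle_of_length e k.

(* proper coloring with colors 'I_k (standing for [k]) *)
Definition proper_coloring (T : finType) (e : rel T) (k : nat)
  (c : T -> 'I_k) : Prop :=
  forall u v, e u v -> c u != c v.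

Definition b_vertex (T : finType) (e : rel T) (k : nat)
  (c : T -> 'I_k) (v : T) : Prop :=
  forall i : 'I_k, exists2 u, u \in cnbhd e v & c u = i.

(* Main.v *)
Require Import Defs.
From mathcomp Require Import all_boot all_fingroup.
Set Implicit Arguments. Unset Strict Implicit. Unset Printing Implicit Defensive.

Lemma exists_inj (T K : finType) (k0 : K) (A : {set T}) (B : {set K}) :
  #|A| <= #|B| -> exists f : T -> K, {in A &, injective f} /\ {in A, forall a, f a \in B}.
Proof.
move=> hAB.
exists (fun a => nth k0 (enum B) (index a (enum A))); split.
- move=> a a' ha ha' /eqP.
  have hs : forall z, z \in A -> index z (enum A) < size (enum B).
    move=> z hz; rewrite -cardE; apply: leq_trans hAB.
    by rewrite cardE index_mem mem_enum.
  rewrite nth_uniq ?hs ?enum_uniq // => /eqP hi.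
  have e1 : nth a (enum A) (index a (enum A)) = a by rewrite nth_index ?mem_enum.
  have e2 : nth a (enum A) (index a' (enum A)) = a' by rewrite nth_index ?mem_enum.
  by rewrite -e1 hi e2.
- move=> a ha; rewrite -mem_enum; apply: mem_nth.
  by rewrite -cardE; apply: leq_trans hAB; rewrite cardE index_mem mem_enum.
Qed.

Lemma extend (T : finType) (e : rel T) (k : nat) (c : T -> 'I_k) (S : {set T}) :
  symmetric e -> irreflexive e -> (forall v, #|nbhd e v| < k) ->
  (forall u v, u \in S -> v \in S -> e u v -> c u != c v) ->
  exists c' : T -> 'I_k, (forall u v, e u v -> c' u != c' v) /\ forall v, v \in S -> c' v = c v.
Proof.
move=> hsym hirr hdeg.
move: {2}#|~: S| (erefl #|~: S|) => n; elim: n S c => [|n IH] S c hn hS.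
  have ST : S = setT by apply/setP=> z; rewrite inE; apply/negbNE; apply/negP=> hz;
    move/eqP: hn; rewrite cards_eq0 => /eqP/setP/(_ z); rewrite !inE hz.
  exists c; split=> // u v; apply: hS; by rewrite ST inE.
have [v hv] : exists v, v \in ~: S.
  by apply/set0Pn; rewrite -card_gt0 hn.
have [col hcol] : exists col, col \notin c @: nbhd e v.
  apply/existsP; rewrite -negb_forall; apply/negP=> /forallP hall.
  have hsub : [set: 'I_k] \subset c @: nbhd e v.
    by apply/subsetP=> z _; apply: hall.
  have := subset_leq_card hsub; rewrite cardsT card_ord => h.
  by have := leq_ltn_trans h (leq_ltn_trans (leq_imset_card _ _) (hdeg v)); rewrite ltnn.
have hn' : #|~: (v |: S)| = n.
  have : #|~: S| = (v \in ~: S) + #|~: S :\ v| by rewrite (cardsD1 v).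
  rewrite hv hn add1n => -[->]; apply: eq_card => z; rewrite !inE negb_or andbC.
  done.
have hvS : v \notin S by rewrite inE in hv.
pose c1 := fun z => if z == v then col else c z.
have hprop : forall u w, u \in v |: S -> w \in v |: S -> e u w -> c1 u != c1 w.
move=> u w; rewrite !inE /c1.
case: (eqVneq u v) => [-> | huv] /=; case: (eqVneq w v) => [-> | hwv] //=.
- by move=> _ _; rewrite hirr.
- move=> _ hw hvw; apply/eqP=> hcw; move: hcol; rewrite hcw; apply/negP/negPn.
  by apply: imset_f; rewrite inE.
- move=> hu _ huw; apply/eqP=> hcw; move: hcol; rewrite -hcw; apply/negP/negPn.
  by apply: imset_f; rewrite inE hsym.
- by apply: hS.
have [c' [hc' hagree]] := IH (v |: S) c1 hn' hprop.
exists c'; split=> // z hz; rewrite hagree ?inE ?hz ?orbT // /c1.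
by case: eqP => // hzv; move: hvS; rewrite -hzv hz.
Qed.


Lemma swap_fix (T K : finType) (A : {set T}) (bad : T -> K -> bool) : 6 <= #|A| ->
  (forall a, a \in A -> #|[set k | bad a k]| <= 3) ->
  (forall k, #|[set b in A | bad b k]| <= 3) ->
  forall c : T -> K, {in A &, injective c} ->
  exists c' : T -> K, [/\ {in A &, injective c'}, (forall z, z \notin A -> c' z = c z),
     (forall a, a \in A -> c' a \in c @: A) & forall a, a \in A -> ~~ bad a (c' a)].
Proof.
move=> hA hb1 hb2 c.
move: {2}#|[set a in A | bad a (c a)]| (leqnn #|[set a in A | bad a (c a)]|) => n.
elim: n c => [|n IH] c hn hinj.
  exists c; split=> // [a ha|a ha]; first by apply: imset_f.
  apply/negP=> hb; move: hn; rewrite leqn0 cards_eq0 => /eqP/setP/(_ a).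
  by rewrite !inE ha hb.
case: (set_0Vmem [set a in A | bad a (c a)]) => [h0 | [a]].
  exists c; split=> // [a ha|a ha]; first by apply: imset_f.
  by apply/negP=> hb; move/setP: h0 => /(_ a); rewrite !inE ha hb.
rewrite inE => /andP [ha hba].
pose X := [set b in A | bad a (c b)].
pose Y := [set b in A | bad b (c a)].
have hX : #|X| <= 3.
  have <- : #|c @: X| = #|X|.
    apply: card_in_imset => u v; rewrite !inE => /andP[hu _] /andP[hv _]; exact: hinj.
  apply: leq_trans (hb1 a ha); apply: subset_leq_card; apply/subsetP=> k /imsetP[z].
  by rewrite !inE => /andP[_ hz] ->.
have hY : #|Y| <= 3 by apply: hb2.
have hXY : #|X :|: Y| < #|A|.
  have haXY : a \in X :&: Y by rewrite !inE ha hba.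
  have : 0 < #|X :&: Y| by rewrite card_gt0; apply/set0Pn; exists a.
  have := cardsUI X Y; move: hX hY; move: #|X :|: Y| #|X :&: Y| #|X| #|Y| => p q r s.
  move: hA; move: #|A| => t.
  move=> h6 h1 h2 h3 h4; apply: leq_trans h6; rewrite ltnS.
  have : p + q <= 6 by rewrite h3; apply: leq_trans (leq_add h1 h2) _.
  by case: q h4 {h3} => // q _; rewrite addnS ltnS => /(leq_trans (leq_addr _ _)).
have [b hbA hbXY] : exists2 b, b \in A & b \notin X :|: Y.
  apply/exists_inP; rewrite -negb_forall_in; apply/negP => /forall_inP hall.
  have : A \subset X :|: Y by apply/subsetP => z hz; exact: hall.
  by move/subset_leq_card; rewrite leqNgt hXY.
move: hbXY; rewrite !inE hbA /= negb_or => /andP[hb1' hb2'].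
have hab : a != b by apply/eqP=> hab; move: hb1'; rewrite -hab hba.
pose c1 := fun z => c (tperm a b z).
have htA : forall z, z \in A -> tperm a b z \in A.
  by move=> z hz; case: tpermP => // ->.
have hinj1 : {in A &, injective c1}.
  by move=> u v hu hv /hinj => /(_ (htA _ hu) (htA _ hv)) /perm_inj.
have hn1 : #|[set z in A | bad z (c1 z)]| <= n.
  have hsub : [set z in A | bad z (c1 z)] \subset [set a in A | bad a (c a)] :\ a.
    apply/subsetP => z; rewrite !inE /c1 => /andP[hz]; case: tpermP => [-> | -> | hza hzb].
    - by rewrite (negbTE hb1').
    - by rewrite (negbTE hb2').
    - by move=> hbz; rewrite hz hbz !andbT; apply/eqP.
  have := subset_leq_card hsub; rewrite (cardsD1 a) !inE ha hba add1n in hn.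
  by move=> h; apply: leq_trans h _; rewrite -ltnS.
have [c' [h1 h2 h3 h4]] := IH c1 hn1 hinj1.
exists c'; split=> //.
- move=> z hz; rewrite h2 // /c1 tpermD //; apply/eqP => hh; move: hz; by rewrite -hh ?ha ?hbA.
- move=> z hz; have /imsetP [w hw ->] := h3 z hz; apply: imset_f; exact: htA.
Qed.


Lemma e_neq (T : finType) (e : rel T) u v : irreflexive e -> e u v -> u != v.
Proof. by move=> hirr huv; apply/eqP=> h; move: huv; rewrite h hirr. Qed.

Lemma no_tri (T : finType) (e : rel T) u v w : irreflexive e -> girth_ge e 5 ->
  e u v -> e v w -> e w u -> False.
Proof.
move=> hirr hg huv hvw hwu; apply: (hg 3) => //; split=> //; exists [:: u; v; w].
split=> //; last by rewrite /= huv hvw hwu.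
rewrite /= !inE negb_or (e_neq hirr huv) (e_neq hirr hvw) andbT /=.
by rewrite eq_sym (e_neq hirr hwu).
Qed.

Lemma no_sq (T : finType) (e : rel T) u v w z : irreflexive e -> girth_ge e 5 ->
  e u v -> e v w -> e w z -> e z u -> u != w -> v != z -> False.
Proof.
move=> hirr hg huv hvw hwz hzu huw hvz; apply: (hg 4) => //; split=> //; exists [:: u; v; w; z].
split=> //; last by rewrite /= huv hvw hwz hzu.
rewrite /= !inE !negb_or (e_neq hirr huv) (e_neq hirr hvw) (e_neq hirr hwz) huw hvz /=.
by rewrite eq_sym (e_neq hirr hzu).
Qed.

Lemma card_bigcup_seq (T : finType) (F : T -> {set T}) (X : {set T}) (ys : seq T) :
  (forall y, y \in ys -> #|X :&: F y| <= 1) ->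
  #|X :&: \bigcup_(y <- ys) F y| <= size ys.
Proof.
elim: ys => [|y ys IH] h; first by rewrite big_nil setI0 cards0.
rewrite big_cons setIUr /=; apply: leq_trans (leq_card_setU _ _) _.
rewrite -add1n; apply: leq_add; first by apply: h; rewrite inE eqxx.
by apply: IH => z hz; apply: h; rewrite inE hz orbT.
Qed.

Lemma bv_of_inj (T : finType) (e : rel T) (d : nat) (c : T -> 'I_d.+1) v :
  irreflexive e -> #|nbhd e v| = d -> {in cnbhd e v &, injective c} -> b_vertex e c v.
Proof.
move=> hirr hd hinj i.
have hc : #|cnbhd e v| = d.+1 by rewrite /cnbhd cardsU1 hd inE hirr.
have : c @: cnbhd e v = setT.
  by apply/eqP; rewrite eqEcard subsetT cardsT card_ord (card_in_imset hinj) hc leqnn.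
by move/setP/(_ i); rewrite inE => /imsetP[u hu ->]; exists u.
Qed.


Lemma in_bigcup_seq (T : finType) (F : T -> {set T}) ys w :
  (w \in \bigcup_(y <- ys) F y) = has (fun y => w \in F y) ys.
Proof.
elim: ys => [|y ys IH]; first by rewrite big_nil inE.
by rewrite big_cons in_setU IH.
Qed.

Definition Inv (T : finType) (e : rel T) (k : nat) (x : T) (c0 c : T -> 'I_k) (ys : seq T) : Prop :=
 [/\ forall z, z \in cnbhd e x -> c z = c0 z,
     forall y, y \in ys -> {in nbhd e y :\ x &, injective c},
     forall y a, y \in ys -> a \in nbhd e y :\ x -> (c a != c0 x) && (c a != c0 y) &
     forall y y' a a', y \in ys -> y' \in ys -> a \in nbhd e y :\ x -> a' \in nbhd e y' :\ x ->
        e a a' -> c a != c a'].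

Lemma build (d : nat) (T : finType) (e : rel T) (x : T) (c0 : T -> 'I_d.+1) :
  7 <= d -> symmetric e -> irreflexive e -> regular e d -> girth_ge e 5 ->
  (forall y, y \in nbhd e x -> c0 y != c0 x) ->
  forall ys, uniq ys -> {subset ys <= nbhd e x} -> size ys <= 4 -> exists c, Inv e x c0 c ys.
Proof.
move=> hd hsym hirr hreg hg hc0.
elim => [|y ys IH] /= huniq hsub hsize.
  by exists c0; split.
move/andP: huniq => [hyn hun].
have hsub' : {subset ys <= nbhd e x} by move=> z hz; apply: hsub; rewrite inE hz orbT.
have [c [Ic1 Ic2 Ic3 Ic4]] := IH hun hsub' (ltnW hsize).
have hy : y \in nbhd e x by apply: hsub; rewrite inE eqxx.
have hxy : e x y by rewrite inE in hy.
set A := nbhd e y :\ x.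
have hA : #|A| = d.-1.
  have := cardsD1 x (nbhd e y); rewrite hreg inE hsym hxy add1n => ->; done.
have hA6 : 6 <= #|A| by rewrite hA; case: (d) hd.
pose B := ~: [set c0 x; c0 y].
have hB : #|B| = d.-1.
  have := cardsC [set c0 x; c0 y]; rewrite cards2 eq_sym hc0 // card_ord /= => h.
  have E : forall m n : nat, 2 + m = n.+1 -> m = n.-1 by move=> m n [<-].
  exact: E h.
have [f [hf hfB]] := exists_inj ord0 (eq_leq (etrans hA (esym hB))).
pose c1 := fun z => if z \in A then f z else c z.
pose P := \bigcup_(y' <- ys) (nbhd e y' :\ x).
have hys : forall y', y' \in ys -> e x y' /\ y' != y.
  move=> y' hy'; split; first by have := hsub y'; rewrite inE hy' orbT inE => /(_ isT).
  by apply/eqP=> h; move: hyn; rewrite -h hy'.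
have memP : forall w, w \in P -> exists2 y', y' \in ys & w \in nbhd e y' :\ x.
  by move=> w; rewrite in_bigcup_seq => /hasP.
have hAy' : forall y' a, y' \in ys -> a \in A -> a \notin nbhd e y' :\ x.
  move=> y' a hy' ha; apply/negP; rewrite !inE => /andP[hax hy'a].
  move: ha; rewrite !inE => /andP[_ hya].
  have [hxy' hne] := hys y' hy'.
  by apply: (no_sq hirr hg hxy hya (_ : e a y') (_ : e y' x)); rewrite 1?hsym // eq_sym.
have hPA : forall w, w \in P -> w \notin A.
  by move=> w /memP [y' hy' hw]; apply/negP => hwA; move: hw; apply/negP; exact: hAy'.
pose bad := fun a k => [exists w, [&& w \in P, e a w & c w == k]].
have hsz : size ys <= 3 by [].
have hb1 : forall a, a \in A -> #|[set k | bad a k]| <= 3.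
  move=> a ha.
  have hsb : [set k | bad a k] \subset c @: (nbhd e a :&: P).
    apply/subsetP => k; rewrite inE => /existsP [w /and3P[hw hea /eqP <-]].
    by apply: imset_f; rewrite !inE hea hw.
  apply: leq_trans (subset_leq_card hsb) _; apply: leq_trans (leq_imset_card _ _) _.
  apply: leq_trans hsz; apply: card_bigcup_seq => y' hy'.
  apply/card_le1_eqP => w1 w2; rewrite !inE => /and3P[haw1 _ hy'w1] /and3P[haw2 _ hy'w2].
  case: (eqVneq w2 w1) => // hne; exfalso.
  have [hxy' hne'] := hys y' hy'.
  move: ha; rewrite !inE => /andP[_ hya].
  apply: (no_sq hirr hg haw1 (_ : e w1 y') hy'w2 (_ : e w2 a)); rewrite 1?hsym // 1?eq_sym //.
  apply/eqP => hay'; apply: (no_tri hirr hg hxy (_ : e y y') (_ : e y' x)); rewrite 1?hsym //.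
  by rewrite hay' hsym.
have hb2 : forall k, #|[set b in A | bad b k]| <= 3.
  move=> k.
  pose W := [set w in P | c w == k].
  have hW : #|W| <= 3.
    apply: leq_trans hsz.
    have -> : W = [set w | c w == k] :&: P by apply/setP => w; rewrite !inE andbC.
    apply: card_bigcup_seq => y' hy'.
    apply/card_le1_eqP => w1 w2 /setIP[hk1 hw1] /setIP[hk2 hw2].
    by apply: (Ic2 y' hy') => //; move: hk1 hk2; rewrite !inE => /eqP-> /eqP->.
  pose g := fun b => odflt b [pick w in W | e b w].
  have hgW : forall b, b \in [set b in A | bad b k] -> g b \in W /\ e b (g b).
    move=> b; rewrite inE => /andP[hb /existsP[w /and3P[hw hbw hcw]]].
    rewrite /g; case: pickP => [w' /andP[hw' hbw'] | hnone] //=.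
    by have := hnone w; rewrite !inE hw hcw hbw.
  have hginj : {in [set b in A | bad b k] &, injective g}.
    move=> b1 b2 hb1' hb2' hgg.
    have [hw1 he1] := hgW b1 hb1'; have [hw2 he2] := hgW b2 hb2'.
    move: hb1' hb2'; rewrite !inE => /andP[/andP[_ hyb1] _] /andP[/andP[_ hyb2] _].
    case: (eqVneq b1 b2) => [//|hne]; exfalso.
    move: hw1; rewrite inE => /andP[/memP [y' hy' hw'] _].
    have [hxy' hne'] := hys y' hy'.
    move: hw'; rewrite !inE => /andP[_ hy'w].
    apply: (no_sq hirr hg hyb1 he1 (_ : e (g b1) b2) (_ : e b2 y)); rewrite 1?hsym // 1?hgg //.
    apply/eqP => hyw; apply: (no_tri hirr hg hxy (_ : e y y') (_ : e y' x)); rewrite 1?hsym //.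
    by rewrite hyw -hgg.
  rewrite -(card_in_imset hginj); apply: leq_trans hW; apply: subset_leq_card.
  by apply/subsetP => w /imsetP[b hb ->]; case: (hgW b hb).
have hc1inj : {in A &, injective c1}.
  by move=> u v hu hv; rewrite /c1 hu hv; apply: hf.
have [c2 [h1 h2 h3 h4]] := swap_fix hA6 hb1 hb2 hc1inj.
have hc2B : forall a, a \in A -> c2 a \in B.
  move=> a ha; have /imsetP[a' ha' ->] := h3 a ha; rewrite /c1 ha'; exact: hfB.
have hc2c : forall z, z \notin A -> c2 z = c z.
  by move=> z hz; rewrite h2 // /c1 (negbTE hz).
have hxA : forall z, z \in cnbhd e x -> z \notin A.
  move=> z; rewrite !inE => /orP[/eqP -> | hxz]; first by rewrite eqxx.
  apply/negP => /andP[_ hyz]; apply: (no_tri hirr hg hxy hyz); by rewrite hsym.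
exists c2; split.
- by move=> z hz; rewrite hc2c ?hxA // Ic1.
- move=> y'' /predU1P [-> | hy''] //.
  move=> u v hu hv; rewrite !hc2c; first exact: Ic2 hy'' u v hu hv.
  + by apply/negP => /(hAy' y'' v hy''); rewrite hv.
  + by apply/negP => /(hAy' y'' u hy''); rewrite hu.
- move=> y'' a /predU1P [-> | hy''] ha.
    by have := hc2B a ha; rewrite !inE negb_or.
  rewrite hc2c; first exact: Ic3 hy'' ha.
  by apply/negP => /(hAy' y'' a hy''); rewrite ha.
- have hnotA : forall y' a, y' \in ys -> a \in nbhd e y' :\ x -> a \notin A.
    by move=> y' a hy' ha; apply/negP => /(hAy' y' a hy'); rewrite ha.
  have hinP : forall y' a, y' \in ys -> a \in nbhd e y' :\ x -> a \in P.
    by move=> y' a hy' ha; rewrite in_bigcup_seq; apply/hasP; exists y'.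
  have key : forall y' a a', y' \in ys -> a \in A -> a' \in nbhd e y' :\ x -> e a a' ->
      c2 a != c2 a'.
    move=> y' a a' hy' ha ha' haa'; rewrite (hc2c a') ?(hnotA y') //.
    apply/negP => /eqP heq; move: (h4 a ha); apply/negP/negPn.
    by apply/existsP; exists a'; rewrite (hinP y') // haa' heq eqxx.
  move=> y1 y2 a a' /predU1P [-> | hy1] /predU1P [-> | hy2] ha ha' haa'.
  + exfalso; move: ha ha'; rewrite !inE => /andP[_ hya] /andP[_ hya'].
    by apply: (no_tri hirr hg hya haa'); rewrite hsym.
  + exact: key hy2 ha ha' haa'.
  + by rewrite eq_sym; apply: key hy1 ha' ha _; rewrite hsym.
  + rewrite (hc2c a) ?(hnotA y1 a) // (hc2c a') ?(hnotA y2 a') //; exact: Ic4 hy1 hy2 ha ha' haa'.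
Qed.


Theorem mainTheorem2 (d : nat) (T : finType) (e : rel T) :
  7 <= d -> simple_graph e -> regular e d -> girth_ge e 5 ->
  forall x : T, exists c : T -> 'I_d.+1,
    [/\ proper_coloring e c, b_vertex e c x &
        exists S : {set T}, [/\ S \subset nbhd e x, 4 <= #|S| &
                               forall v, v \in S -> b_vertex e c v]].
Proof.
move=> hd [hsym hirr] hreg hg x.
have hBx : #|nbhd e x| <= #|[set~ (ord0 : 'I_d.+1)]| by rewrite cardsC1 card_ord hreg.
have [f [hf hfB]] := exists_inj (ord0 : 'I_d.+1) hBx.
pose c0 := fun z => if z == x then (ord0 : 'I_d.+1) else f z.
have hxx : forall y, y \in nbhd e x -> y != x.
  by move=> y; rewrite inE => hxy; rewrite eq_sym; apply: e_neq hirr hxy.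
have hc0 : forall y, y \in nbhd e x -> c0 y != c0 x.
  move=> y hy; rewrite /c0 eqxx (negbTE (hxx y hy)).
  by have := hfB y hy; rewrite !inE.
have hc0inj : {in cnbhd e x &, injective c0}.
  move=> u v; rewrite !inE => /predU1P[-> | hu] /predU1P[-> | hv] //.
  - by move=> h; apply/eqP; move: (hc0 v); rewrite inE => /(_ hv); rewrite h eqxx.
  - by move=> h; apply/eqP; move: (hc0 u); rewrite inE => /(_ hu); rewrite h eqxx.
  - rewrite /c0 (negbTE (hxx u _)) ?inE // (negbTE (hxx v _)) ?inE //.
    by apply: hf; rewrite inE.
pose ys := take 4 (enum (nbhd e x)).
have hysu : uniq ys by apply: take_uniq; apply: enum_uniq.
have hyss : {subset ys <= nbhd e x} by move=> z /mem_take; rewrite mem_enum.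
have hysz : size ys = 4 by rewrite size_take -cardE hreg; case: (d) hd => // [[|[|[|[|]]]]].
have [c [Ic1 Ic2 Ic3 Ic4]] := build hd hsym hirr hreg hg hc0 hysu hyss (eq_leq hysz).
pose S := cnbhd e x :|: \bigcup_(y <- ys) (nbhd e y :\ x).
have inS2 : forall y a, y \in ys -> a \in nbhd e y :\ x -> a \in S.
  by move=> y a hy ha; rewrite in_setU in_bigcup_seq; apply/orP; right; apply/hasP; exists y.
have mixed : forall u y v, u \in cnbhd e x -> y \in ys -> v \in nbhd e y :\ x -> e u v -> c u != c v.
  move=> u y v hu hy hv huv.
  have hxy : e x y by have := hyss y hy; rewrite inE.
  move: hv; rewrite !inE => /andP[hvx hyv].
  move: hu; rewrite !inE => /predU1P[hux | hxu].
    by exfalso; rewrite hux in huv; apply: (no_tri hirr hg hxy hyv); rewrite hsym.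
  case: (eqVneq u y) => [-> | huy].
    rewrite Ic1 ?inE ?hxy ?orbT //.
    by have := Ic3 y v hy; rewrite !inE hvx hyv => /(_ isT) /andP[_]; rewrite eq_sym.
  exfalso; apply: (no_sq hirr hg hxu huv (_ : e v y) (_ : e y x)); rewrite 1?hsym //.
  by rewrite eq_sym.
have hprop : forall u v, u \in S -> v \in S -> e u v -> c u != c v.
  have memS : forall z, z \in S -> z \in cnbhd e x \/ exists2 y, y \in ys & z \in nbhd e y :\ x.
    move=> z /setUP[hz | ]; first by left.
    by rewrite in_bigcup_seq => /hasP[y hy hz]; right; exists y.
  move=> u v /memS[hu | [y1 hy1 hu]] /memS[hv | [y2 hy2 hv]] huv.
  - rewrite !Ic1 //; apply/eqP => /(hc0inj _ _ hu hv) h; by move: huv; rewrite h hirr.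
  - exact: mixed hu hy2 hv huv.
  - by rewrite eq_sym; apply: mixed hv hy1 hu _; rewrite hsym.
  - exact: Ic4 hy1 hy2 hu hv huv.
have hdeg : forall v, #|nbhd e v| < d.+1 by move=> v; rewrite hreg.
have [c' [hc' hS]] := extend hsym hirr hdeg hprop.
have hxS : forall z, z \in cnbhd e x -> z \in S by move=> z hz; rewrite in_setU hz.
exists c'; split => //.
  apply: bv_of_inj => // u v hu hv; rewrite !hS ?hxS // !Ic1 //; exact: hc0inj.
exists [set y in ys]; split.
- by apply/subsetP => z; rewrite inE; apply: hyss.
- by rewrite cardsE (card_uniqP hysu) hysz.
move=> y; rewrite inE => hy.
have hyx : y \in cnbhd e x by rewrite inE hyss ?orbT.
have hxy : e x y by have := hyss y hy; rewrite inE.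
have hval : forall u, u \in cnbhd e y -> [\/ u = y, u = x | u \in nbhd e y :\ x].
  move=> u; rewrite !inE => /predU1P[-> | hyu]; first by constructor 1.
  case: (eqVneq u x) => [-> | hux]; first by constructor 2.
  by constructor 3; rewrite hyu.
have cy : c' y = c0 y by rewrite hS ?hxS // Ic1.
have hxin : x \in cnbhd e x by rewrite !inE eqxx.
have cx : c' x = c0 x by rewrite hS ?hxS // Ic1.
have ca : forall a, a \in nbhd e y :\ x -> c' a = c a /\ (c a != c0 x) && (c a != c0 y).
  by move=> a ha; rewrite hS; [split => //; exact: Ic3 ha | exact: inS2 hy ha].
have hcyx := hc0 y (hyss y hy).
apply: bv_of_inj => // u v hu hv huv.
move: huv; case: (hval u hu) => [-> | -> | hu']; case: (hval v hv) => [-> | -> | hv'] huv //.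
- by move: huv; rewrite cy cx => h; move: hcyx; rewrite h eqxx.
- by have [h1 /andP[_ h2]] := ca v hv'; move: huv; rewrite cy h1 => h; move: h2; rewrite h eqxx.
- by move: huv; rewrite cy cx => h; move: hcyx; rewrite h eqxx.
- by have [h1 /andP[h2 _]] := ca v hv'; move: huv; rewrite cx h1 => h; move: h2; rewrite h eqxx.
- by have [h1 /andP[_ h2]] := ca u hu'; move: huv; rewrite cy h1 => h; move: h2; rewrite h eqxx.
- by have [h1 /andP[h2 _]] := ca u hu'; move: huv; rewrite cx h1 => h; move: h2; rewrite h eqxx.
- have [h1 _] := ca u hu'; have [h2 _] := ca v hv'; move: huv; rewrite h1 h2.
  exact: Ic2 hy u v hu' hv'.
Qed.
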